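(* Let $\lambda^*\in\Lambda$ be a maximizer of the dual function $d$ over $\Lambda$, and suppose the triangle scaling property holds with constant $G\ge1$. For $T\ge1$ let $S_{T-1}=\sum_{k=0}^{T-1}\eta_k/\theta_k$ and $$\tilde x_T=\frac{1}{S_{T-1}}\sum_{k=0}^{T-1}\frac{\eta_k}{\theta_k}x_{k+1},\qquad\tilde\lambda_T=\frac{1}{S_{T-1}}\sum_{k=0}^{T-1}\frac{\eta_k}{\theta_k}\lambda_{k+1}.$$ Then the acc-BALM iterates satisfy, for all $x\in\mathcal{X}$, $\lambda\in\Lambda$, $$L(\tilde x_T,\lambda)-L(x,\tilde\lambda_T)\le\frac{G\,D_h(\lambda,\lambda_0)+G\,D_h(\lambda^*,\lambda_0)\sum_{k=0}^{T-1}\theta_k}{S_{T-1}}.$$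
   Context: Problem: $\min_{x\in\mathcal{X}}f(x)$ s.t. $Ax=b$ (with $\Lambda=\mathbb{R}^m$) or s.t. $Ax\le b$ (with $\Lambda=\mathbb{R}^m_+$); $f$ closed convex coercive, $\mathcal{X}\subseteq\mathbb{R}^n$ closed convex, $A\in\mathbb{R}^{m\times n}$, $b\in\mathbb{R}^m$; $L(x,\lambda)=f(x)+\lambda^\top(Ax-b)$, $d(\lambda)=\inf_{x\in\mathcal{X}}L(x,\lambda)$. $h:\Lambda\to\mathbb{R}$ proper, coercive, strictly convex, continuously differentiable on $\Lambda$; $D_h(\lambda,\tilde\lambda)=h(\lambda)-h(\tilde\lambda)-\nabla h(\tilde\lambda)^\top(\lambda-\tilde\lambda)$. Triangle scaling property with constant $G$: $D_h((1-\theta)\lambda+\theta\lambda_1,(1-\theta)\lambda+\theta\lambda_2)\le G\theta^2D_h(\lambda_1,\lambda_2)$ for all $\lambda,\lambda_1,\lambda_2\in\Lambda$, $\theta\in[0,1]$. Algorithm acc-BALM: given $\lambda_0\in\Lambda$, $v_0=\lambda_0$, $\theta_0=1$, $\eta_k>0$; for $k\ge0$: $y_k=\theta_kv_k+(1-\theta_k)\lambda_k$; $(x_{k+1},\lambda_{k+1})\in\mathcal{X}\times\Lambda$ is a saddle point on $\mathcal{X}\times\Lambda$ (min in $x$, max in $\lambda$) of $L(x,\lambda)-\frac1{\eta_k}D_h(\lambda,y_k)$; $v_{k+1}\in\arg\max_{\lambda\in\Lambda}\big\{-GD_h(\lambda,\lambda_0)+\sum_{j=0}^k\frac{\eta_j}{\theta_j}\big(d(\lambda_{j+1})+\frac1{\eta_j}(\nabla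 h(\lambda_{j+1})-\nabla h(y_j))^\top(\lambda-\lambda_{j+1})\big)\big\}$; $\theta_{k+1}\in(0,1]$ is defined by $\frac{\eta_k}{\theta_k^2}=\frac{\eta_{k+1}}{\theta_{k+1}^2}-\frac{\eta_{k+1}}{\theta_{k+1}}$. All saddle points and maximizers are assumed to exist. *)

(* Defs.v *)
From Stdlib Require Import Reals Lra.
Open Scope R_scope.

(* Vectors of R^n are modelled as functions nat -> R supported on the
   first n coordinates (see [supp]). *)
Definition vec := nat -> R.

Fixpoint rsum (T : nat) (g : nat -> R) : R :=
  match T with
  | O => 0
  | S t => rsum t g + g t
  end.

Definition supp (n : nat) (v : vec) : Prop := forall i, (n <= i)%nat -> v i = 0.

Definition dot (n : nat) (u v : vec) : R := rsum n (fun i => u i * v i).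
Definition vnorm (n : nat) (v : vec) : R := sqrt (dot n v v).
Definition vlin (a : R) (u : vec) (c : R) (v : vec) : vec := fun i => a * u i + c * v i.
Definition vsub (u v : vec) : vec := fun i => u i - v i.

Definition resid (m n : nat) (A : nat -> nat -> R) (b : vec) (x : vec) : vec :=
  fun i => if Nat.ltb i m then rsum n (fun j => A i j * x j) - b i else 0.

Definition Lag (m n : nat) (f : vec -> R) (A : nat -> nat -> R) (b : vec)
  (x lam : vec) : R := f x + dot m lam (resid m n A b x).

(* Lambda = R^m (ineq = false) or R^m_+ (ineq = true) *)
Definition LamSet (m : nat) (ineq : bool) (lam : vec) : Prop :=
  supp m lam /\ (ineq = true -> forall i, (i < m)%nat -> 0 <= lam i).

Definition Breg (m : nat) (h : vec -> R) (gh : vec -> vec) (lam lam' : vec) : R :=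
  h lam - h lam' - dot m (gh lam') (vsub lam lam').

Definition closed_subset (n : nat) (X : vec -> Prop) : Prop :=
  forall (xs : nat -> vec) (x : vec), (forall k, X (xs k)) -> supp n x ->
    (forall i, (i < n)%nat -> Un_cv (fun k => xs k i) (x i)) -> X x.
Definition convex_subset (X : vec -> Prop) : Prop :=
  forall x y t, X x -> X y -> 0 <= t <= 1 -> X (vlin t x (1 - t) y).

Definition convex_on (S : vec -> Prop) (g : vec -> R) : Prop :=
  forall x y t, S x -> S y -> 0 <= t <= 1 ->
    g (vlin t x (1 - t) y) <= t * g x + (1 - t) * g y.
Definition strictly_convex_on (S : vec -> Prop) (g : vec -> R) : Prop :=
  forall x y t, S x -> S y -> x <> y -> 0 < t < 1 ->
    g (vlin t x (1 - t) y) < t * g x + (1 - t) * g y.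
Definition lsc_on (n : nat) (S : vec -> Prop) (g : vec -> R) : Prop :=
  forall x eps, S x -> 0 < eps -> exists delta, 0 < delta /\
    forall y, S y -> vnorm n (vsub y x) < delta -> g x - eps < g y.
Definition coercive_on (n : nat) (S : vec -> Prop) (g : vec -> R) : Prop :=
  forall M, exists R0, forall x, S x -> R0 < vnorm n x -> M < g x.
Definition C1_on (n : nat) (S : vec -> Prop) (g : vec -> R) (gg : vec -> vec) : Prop :=
  (forall x, S x -> supp n (gg x)) /\
  (forall x eps, S x -> 0 < eps -> exists delta, 0 < delta /\
     forall y, S y -> vnorm n (vsub y x) < delta ->
       Rabs (g y - g x - dot n (gg x) (vsub y x)) <= eps * vnorm n (vsub y x)) /\
  (forall x eps, S x -> 0 < eps -> exists delta, 0 < delta /\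
     forall y, S y -> vnorm n (vsub y x) < delta ->
       vnorm n (vsub (gg y) (gg x)) < eps).

Definition lower_bd (X : vec -> Prop) (Lf : vec -> vec -> R) (lam : vec) (r : R) : Prop :=
  forall x, X x -> r <= Lf x lam.
Definition is_dual_value (X : vec -> Prop) (Lf : vec -> vec -> R) (lam : vec) (r : R) : Prop :=
  lower_bd X Lf lam r /\ forall r', lower_bd X Lf lam r' -> r' <= r.
(* lamstar maximizes d over Lambda (d may take the value -infinity elsewhere) *)
Definition dual_maximizer (X Lam : vec -> Prop) (Lf : vec -> vec -> R) (lamstar : vec) : Prop :=
  Lam lamstar /\ exists dstar, is_dual_value X Lf lamstar dstar /\
    forall lam r, Lam lam -> lower_bd X Lf lam r -> r <= dstar.

Definition triangle_scaling (Lam : vec -> Prop) (D : vec -> vec -> R) (G : R) : Prop :=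
  forall lam l1 l2 t, Lam lam -> Lam l1 -> Lam l2 -> 0 <= t <= 1 ->
    D (vlin (1 - t) lam t l1) (vlin (1 - t) lam t l2) <= G * t ^ 2 * D l1 l2.

Definition ergavg (eta theta : nat -> R) (z : nat -> vec) (T : nat) : vec :=
  fun i => rsum T (fun k => eta k / theta k * z (S k) i) / rsum T (fun k => eta k / theta k).

(* Main.v *)
Require Import Defs.
From Stdlib Require Import Reals Lra Psatz FunctionalExtensionality Classical.
Open Scope R_scope.


Lemma rsum_ext T f g : (forall i, f i = g i) -> rsum T f = rsum T g.
Proof. intros H; induction T; simpl; [reflexivity| rewrite IHT, H; reflexivity]. Qed.

Lemma rsum_lin2 T a c f g :
  rsum T (fun i => a * f i + c * g i) = a * rsum T f + c * rsum T g.
Proof. induction T; simpl; [ring| rewrite IHT; ring]. Qed.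

Lemma rsum_scal T c f : rsum T (fun i => c * f i) = c * rsum T f.
Proof. induction T; simpl; [ring| rewrite IHT; ring]. Qed.

Lemma rsum_le T f g : (forall i, (i < T)%nat -> f i <= g i) -> rsum T f <= rsum T g.
Proof. induction T; intros H; simpl; [lra|].
  apply Rplus_le_compat; [apply IHT; intros; apply H; lia| apply H; lia]. Qed.

Lemma rsum_nonneg T f : (forall i, 0 <= f i) -> 0 <= rsum T f.
Proof. intros H; induction T; simpl; [lra| specialize (H T); lra]. Qed.

Lemma dot_vlin_l m a p c q r : dot m (vlin a p c q) r = a * dot m p r + c * dot m q r.
Proof. unfold dot. rewrite <- rsum_lin2. apply rsum_ext; intros; unfold vlin; ring. Qed.
Lemma dot_vlin_r m a p c q r : dot m r (vlin a p c q) = a * dot m r p + c * dot m r q.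
Proof. unfold dot. rewrite <- rsum_lin2. apply rsum_ext; intros; unfold vlin; ring. Qed.
Lemma dot_vsub_l m p q r : dot m (vsub p q) r = dot m p r - dot m q r.
Proof. unfold dot. replace (rsum m (fun i => p i * r i) - rsum m (fun i => q i * r i))
  with (1 * rsum m (fun i => p i * r i) + (-1) * rsum m (fun i => q i * r i)) by ring.
  rewrite <- rsum_lin2. apply rsum_ext; intros; unfold vsub; ring. Qed.
Lemma dot_split m g u a b : dot m g (vsub u b) = dot m g (vsub u a) + dot m g (vsub a b).
Proof. unfold dot. replace (rsum m (fun i => g i * vsub u a i) + rsum m (fun i => g i * vsub a b i))
  with (1 * rsum m (fun i => g i * vsub u a i) + 1 * rsum m (fun i => g i * vsub a b i)) by ring.
  rewrite <- rsum_lin2. apply rsum_ext; intros; unfold vsub; ring. Qed.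
Lemma dot_scal_r m u w t : dot m u (fun i => t * w i) = t * dot m u w.
Proof. unfold dot. rewrite <- rsum_scal. apply rsum_ext; intros; ring. Qed.
Lemma dot_sub_lin m s a p c q l : a + c = 1 ->
  dot m s (vsub (vlin a p c q) l) = a * dot m s (vsub p l) + c * dot m s (vsub q l).
Proof. intros H. unfold dot. rewrite <- rsum_lin2. apply rsum_ext; intros; unfold vsub, vlin.
  replace c with (1 - a) by lra. ring. Qed.
Lemma dot_self_sub m g w : dot m g (vsub w w) = 0.
Proof. unfold dot. rewrite (rsum_ext _ _ (fun i => 0 * g i)). rewrite rsum_scal; ring.
  intros; unfold vsub; ring. Qed.

Lemma vnorm_scal m u t : 0 <= t -> vnorm m (fun i => t * u i) = t * vnorm m u.
Proof. intros Ht. unfold vnorm, dot.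
  rewrite (rsum_ext _ _ (fun i => (t*t) * (u i * u i))) by (intros; ring).
  rewrite rsum_scal. rewrite sqrt_mult_alt by nra. rewrite sqrt_square by lra. reflexivity. Qed.

Lemma LamSet_lin m ineq a p c q : 0 <= a -> 0 <= c -> LamSet m ineq p -> LamSet m ineq q ->
  LamSet m ineq (vlin a p c q).
Proof. intros Ha Hc [Sp Np] [Sq Nq]. split.
  - intros i Hi. unfold vlin. rewrite Sp, Sq by exact Hi. ring.
  - intros E i Hi. unfold vlin. specialize (Np E i Hi). specialize (Nq E i Hi). nra. Qed.

Lemma core_A m ineq h gh (HC : C1_on m (LamSet m ineq) h gh) v l K :
  LamSet m ineq v -> LamSet m ineq l ->
  (forall t, 0 < t < 1 -> t * K <= h (vlin t l (1-t) v) - h v) ->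
  K <= dot m (gh v) (vsub l v).
Proof.
  intros Hv Hl H. set (g := dot m (gh v) (vsub l v)). set (N := vnorm m (vsub l v)).
  assert (HN: 0 <= N) by apply sqrt_pos.
  destruct (Rle_or_lt K g) as [|Hlt]; [assumption|exfalso].
  destruct HC as [_ [HC _]].
  set (eps := (K - g)/(2*(N+1))).
  assert (Heps: 0 < eps) by (unfold eps; apply Rdiv_lt_0_compat; lra).
  assert (Heps2 : eps * (2*(N+1)) = K - g) by (unfold eps; field; lra).
  destruct (HC v eps Hv Heps) as [delta [Hd Hy]].
  set (q := delta/(2*(N+1))).
  assert (Hq : q * (2*(N+1)) = delta) by (unfold q; field; lra).
  assert (Hq0 : 0 < q) by (unfold q; apply Rdiv_lt_0_compat; lra).
  set (t := Rmin (1/2) q).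
  assert (Ht: 0 < t < 1) by (unfold t; split; [apply Rmin_glb_lt; lra| pose proof (Rmin_l (1/2) q); lra]).
  assert (Ht2: t <= q) by apply Rmin_r.
  assert (Hvt: LamSet m ineq (vlin t l (1-t) v)) by (apply LamSet_lin; auto; lra).
  assert (Heq: vsub (vlin t l (1-t) v) v = fun i => t * vsub l v i)
    by (extensionality i; unfold vsub, vlin; ring).
  specialize (Hy _ Hvt). rewrite Heq, vnorm_scal, dot_scal_r in Hy by lra. fold N g in Hy.
  assert (HtN : t * N < delta) by nra.
  specialize (Hy HtN). pose proof (Rle_trans _ _ _ (Rle_abs _) Hy) as Hy2.
  specialize (H t Ht). assert (0 < t * eps) by nra. nra.
Qed.

Lemma core_B m ineq h gh (HC : C1_on m (LamSet m ineq) h gh) v l K :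
  LamSet m ineq v -> LamSet m ineq l ->
  (forall t, 0 < t < 1 -> h (vlin t l (1-t) v) - h v <= t * K) ->
  dot m (gh v) (vsub l v) <= K.
Proof.
  intros Hv Hl H. set (g := dot m (gh v) (vsub l v)). set (N := vnorm m (vsub l v)).
  assert (HN: 0 <= N) by apply sqrt_pos.
  destruct (Rle_or_lt g K) as [|Hlt]; [assumption|exfalso].
  destruct HC as [_ [HC _]].
  set (eps := (g - K)/(2*(N+1))).
  assert (Heps: 0 < eps) by (unfold eps; apply Rdiv_lt_0_compat; lra).
  assert (Heps2 : eps * (2*(N+1)) = g - K) by (unfold eps; field; lra).
  destruct (HC v eps Hv Heps) as [delta [Hd Hy]].
  set (q := delta/(2*(N+1))).
  assert (Hq : q * (2*(N+1)) = delta) by (unfold q; field; lra).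
  assert (Hq0 : 0 < q) by (unfold q; apply Rdiv_lt_0_compat; lra).
  set (t := Rmin (1/2) q).
  assert (Ht: 0 < t < 1) by (unfold t; split; [apply Rmin_glb_lt; lra| pose proof (Rmin_l (1/2) q); lra]).
  assert (Ht2: t <= q) by apply Rmin_r.
  assert (Hvt: LamSet m ineq (vlin t l (1-t) v)) by (apply LamSet_lin; auto; lra).
  assert (Heq: vsub (vlin t l (1-t) v) v = fun i => t * vsub l v i)
    by (extensionality i; unfold vsub, vlin; ring).
  specialize (Hy _ Hvt). rewrite Heq, vnorm_scal, dot_scal_r in Hy by lra. fold N g in Hy.
  assert (HtN : t * N < delta) by nra.
  specialize (Hy HtN). assert (Hy2 : - (h (vlin t l (1 - t) v) - h v - t * g) <= eps * (t * N)) by (revert Hy; unfold Rabs; destruct (Rcase_abs _); intros; lra).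
  specialize (H t Ht). assert (0 < t * eps) by nra. nra.
Qed.

Lemma rsum_S T g : rsum (S T) g = rsum T g + g T.
Proof. reflexivity. Qed.

Lemma rsum_pos T w : (forall k, 0 < w k) -> 0 < rsum (S T) w.
Proof. intros H; induction T; rewrite rsum_S; [simpl; specialize (H 0%nat); lra| specialize (H (S T)); lra]. Qed.

Lemma Breg_nonneg m ineq h gh (HC : C1_on m (LamSet m ineq) h gh)
  (Hsc : strictly_convex_on (LamSet m ineq) h) u w :
  LamSet m ineq u -> LamSet m ineq w -> 0 <= Breg m h gh u w.
Proof.
  intros Hu Hw. destruct (classic (u = w)) as [E|NE].
  - subst. unfold Breg. rewrite dot_self_sub. lra.
  - assert (K := core_B m ineq h gh HC w u (h u - h w) Hw Hu).
    unfold Breg. cut (dot m (gh w) (vsub u w) <= h u - h w); [lra|].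
    apply K. intros t Ht. specialize (Hsc u w t Hu Hw NE Ht). lra.
Qed.

Lemma three_point m h gh u a b :
  dot m (vsub (gh a) (gh b)) (vsub u a) = Breg m h gh u b - Breg m h gh u a - Breg m h gh a b.
Proof. unfold Breg. rewrite dot_vsub_l, (dot_split m (gh b) u a b). ring. Qed.

Lemma maxlemma m ineq h gh (HC : C1_on m (LamSet m ineq) h gh) (c : R) (Phi : vec -> R) v :
  0 < c -> LamSet m ineq v -> (forall l, LamSet m ineq l -> Phi l <= Phi v) ->
  (forall l t, LamSet m ineq l -> 0 < t < 1 ->
     Phi (vlin t l (1-t) v) + c * h (vlin t l (1-t) v)
     = t * (Phi l + c * h l) + (1-t) * (Phi v + c * h v)) ->
  forall l, LamSet m ineq l -> Phi l <= Phi v - c * Breg m h gh l v.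
Proof.
  intros Hc Hv Hmax Haff l Hl.
  set (X := Phi l + c * h l - Phi v - c * h v).
  assert (K := core_A m ineq h gh HC v l (X / c) Hv Hl).
  assert (HK : X / c <= dot m (gh v) (vsub l v)).
  { apply K. intros t Ht.
    assert (Hvt : LamSet m ineq (vlin t l (1-t) v)) by (apply LamSet_lin; auto; lra).
    specialize (Hmax _ Hvt). specialize (Haff l t Hl Ht).
    apply Rmult_le_reg_l with c; [lra|].
    replace (c * (t * (X / c))) with (t * X) by (field; lra). unfold X. nra. }
  assert (E : c * (X / c) = X) by (field; lra).
  unfold Breg. apply Rmult_le_compat_l with (r := c) in HK; [|lra]. rewrite E in HK. unfold X in HK. lra.
Qed.

Lemma Lag_aff_lam m n f A b x p q a c : a + c = 1 ->
  Lag m n f A b x (vlin a p c q) = a * Lag m n f A b x p + c * Lag m n f A b x q.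
Proof. intros H. unfold Lag. rewrite dot_vlin_l. replace c with (1 - a) by lra. ring. Qed.

Lemma resid_lin m n A b p q t :
  resid m n A b (vlin t p (1-t) q) = vlin t (resid m n A b p) (1-t) (resid m n A b q).
Proof. extensionality i. unfold resid, vlin. destruct (Nat.ltb i m); [|ring].
  rewrite (rsum_ext _ _ (fun j => t * (A i j * p j) + (1-t) * (A i j * q j))) by (intros; ring).
  rewrite rsum_lin2. ring. Qed.

Lemma Lag_conv_x m n f A b l p q t : convex_on (supp n) f -> supp n p -> supp n q -> 0 <= t <= 1 ->
  Lag m n f A b (vlin t p (1-t) q) l <= t * Lag m n f A b p l + (1-t) * Lag m n f A b q l.
Proof. intros Hf Hp Hq Ht. unfold Lag. rewrite resid_lin, dot_vlin_r.
  specialize (Hf p q t Hp Hq Ht). lra. Qed.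

Definition avg (w : nat -> R) (zz : nat -> vec) (T : nat) : vec :=
  fun i => rsum T (fun k => w k * zz (S k) i) / rsum T w.

Lemma jensen (w : nat -> R) (zz : nat -> vec) (Dom : vec -> Prop) (F : vec -> R) :
  (forall k, 0 < w k) ->
  (forall p q t, Dom p -> Dom q -> 0 <= t <= 1 ->
     Dom (vlin t p (1-t) q) /\ F (vlin t p (1-t) q) <= t * F p + (1-t) * F q) ->
  (forall k, Dom (zz (S k))) ->
  forall T, Dom (avg w zz (S T)) /\ rsum (S T) w * F (avg w zz (S T)) <= rsum (S T) (fun k => w k * F (zz (S k))).
Proof.
  intros Hw HF HD T. induction T.
  - assert (E : avg w zz 1 = zz 1%nat).
    { extensionality i. unfold avg. simpl. specialize (Hw 0%nat). field. lra. }
    rewrite E. split; [apply HD|]. simpl. lra.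
  - destruct IHT as [IH1 IH2].
    pose proof (rsum_pos T w Hw) as Hp. pose proof (Hw (S T)) as HwT.
    set (Sm := rsum (S T) w) in *.
    set (t := Sm / (Sm + w (S T))).
    assert (Ht : 0 <= t <= 1).
    { unfold t; split. apply Rlt_le, Rdiv_lt_0_compat; lra.
      apply Rmult_le_reg_r with (Sm + w (S T)); [lra|]. field_simplify; lra. }
    assert (E : avg w zz (S (S T)) = vlin t (avg w zz (S T)) (1-t) (zz (S (S T)))).
    { extensionality i. unfold avg, vlin, t. rewrite (rsum_S (S T)), (rsum_S (S T)). fold Sm.
      field. lra. }
    destruct (HF _ _ t IH1 (HD (S T)) Ht) as [H1 H2].
    rewrite E. split; [exact H1|]. rewrite (rsum_S (S T)), (rsum_S (S T)). fold Sm.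
    assert (E1 : (Sm + w (S T)) * t = Sm) by (unfold t; field; lra).
    assert (E2 : (Sm + w (S T)) * (1 - t) = w (S T)) by (unfold t; field; lra).
    apply Rle_trans with (Sm * F (avg w zz (S T)) + w (S T) * F (zz (S (S T)))); [|lra].
    apply Rmult_le_compat_l with (r := Sm + w (S T)) in H2; [|lra].
    replace ((Sm + w (S T)) * (t * F (avg w zz (S T)) + (1 - t) * F (zz (S (S T)))))
      with (((Sm + w (S T)) * t) * F (avg w zz (S T)) + ((Sm + w (S T)) * (1 - t)) * F (zz (S (S T)))) in H2 by ring.
    rewrite E1, E2 in H2. exact H2.
Qed.
Theorem mainTheorem11
  (m n : nat) (ineq : bool)
  (f : vec -> R) (X : vec -> Prop) (A : nat -> nat -> R) (b : vec)
  (h : vec -> R) (gh : vec -> vec) (d : vec -> R) (G : R)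
  (eta theta : nat -> R) (x lam v y : nat -> vec) (lamstar : vec)
  (* problem data *)
  (HXsupp : forall z, X z -> supp n z)
  (HXclosed : closed_subset n X) (HXconv : convex_subset X)
  (Hbsupp : supp m b)
  (Hfconv : convex_on (supp n) f) (Hflsc : lsc_on n (supp n) f)
  (Hfcoer : coercive_on n (supp n) f)
  (* the dual function d(lam) = inf_{x in X} L(x, lam), wherever this is finite *)
  (Hd : forall l, LamSet m ineq l -> (exists r, lower_bd X (Lag m n f A b) l r) ->
          is_dual_value X (Lag m n f A b) l (d l))
  (* the distance-generating function h *)
  (Hhcoer : coercive_on m (LamSet m ineq) h)
  (Hhsconv : strictly_convex_on (LamSet m ineq) h)
  (HhC1 : C1_on m (LamSet m ineq) h gh)
  (* lamstar maximizes d over Lambda; triangle scaling with G >= 1 *)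
  (Hstar : dual_maximizer X (LamSet m ineq) (Lag m n f A b) lamstar)
  (HG : 1 <= G) (HTSP : triangle_scaling (LamSet m ineq) (Breg m h gh) G)
  (* acc-BALM *)
  (Hlam0 : LamSet m ineq (lam 0%nat)) (Hv0 : v 0%nat = lam 0%nat)
  (Htheta0 : theta 0%nat = 1)
  (Heta : forall k, 0 < eta k)
  (Hy : forall k, y k = vlin (theta k) (v k) (1 - theta k) (lam k))
  (Hsaddle : forall k, X (x (S k)) /\ LamSet m ineq (lam (S k)) /\
     forall z l, X z -> LamSet m ineq l ->
       Lag m n f A b (x (S k)) l - / eta k * Breg m h gh l (y k)
         <= Lag m n f A b (x (S k)) (lam (S k)) - / eta k * Breg m h gh (lam (S k)) (y k)
       /\ Lag m n f A b (x (S k)) (lam (S k)) - / eta k * Breg m h gh (lam (S k)) (y k)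
         <= Lag m n f A b z (lam (S k)) - / eta k * Breg m h gh (lam (S k)) (y k))
  (Hv : forall k, LamSet m ineq (v (S k)) /\
     forall l, LamSet m ineq l ->
       - G * Breg m h gh l (lam 0%nat)
         + rsum (S k) (fun j => eta j / theta j *
             (d (lam (S j)) + / eta j * dot m (vsub (gh (lam (S j))) (gh (y j))) (vsub l (lam (S j)))))
       <= - G * Breg m h gh (v (S k)) (lam 0%nat)
         + rsum (S k) (fun j => eta j / theta j *
             (d (lam (S j)) + / eta j * dot m (vsub (gh (lam (S j))) (gh (y j))) (vsub (v (S k)) (lam (S j))))))
  (Htheta : forall k, 0 < theta (S k) <= 1 /\
     eta k / theta k ^ 2 = eta (S k) / theta (S k) ^ 2 - eta (S k) / theta (S k)) :
  forall (T : nat), (1 <= T)%nat ->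
  forall (z l : vec), X z -> LamSet m ineq l ->
    Lag m n f A b (ergavg eta theta x T) l - Lag m n f A b z (ergavg eta theta lam T)
    <= (G * Breg m h gh l (lam 0%nat)
        + G * Breg m h gh lamstar (lam 0%nat) * rsum T theta)
       / rsum T (fun k => eta k / theta k).
Proof.
  intros T HT z l Hz Hl.
  assert (Hth : forall k, 0 < theta k <= 1).
  { intros [|k]; [rewrite Htheta0; lra| apply (Htheta k)]. }
  assert (HlamL : forall k, LamSet m ineq (lam k)).
  { intros [|k]; [exact Hlam0| apply (Hsaddle k)]. }
  assert (HvL : forall k, LamSet m ineq (v k)).
  { intros [|k]; [rewrite Hv0; exact Hlam0| apply (Hv k)]. }
  assert (HyL : forall k, LamSet m ineq (y k)).
  { intros k. rewrite Hy. specialize (Hth k). apply LamSet_lin; auto; lra. }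
  assert (HA : forall k, rsum (S k) (fun j => eta j / theta j) = eta k / theta k ^ 2).
  { induction k.
    - simpl. rewrite Htheta0. field.
    - rewrite rsum_S, IHk. destruct (Htheta k) as [_ E]. rewrite E. ring. }
  assert (HD0 : forall p q, LamSet m ineq p -> LamSet m ineq q -> 0 <= Breg m h gh p q).
  { intros p q Hp Hq. exact (Breg_nonneg m ineq h gh HhC1 Hhsconv p q Hp Hq). }
  assert (F1 : forall k, d (lam (S k)) = Lag m n f A b (x (S k)) (lam (S k)) /\
                 lower_bd X (Lag m n f A b) (lam (S k)) (d (lam (S k)))).
  { intros k. destruct (Hsaddle k) as [HxX [HlS Hs]].
    assert (Hlb : lower_bd X (Lag m n f A b) (lam (S k)) (Lag m n f A b (x (S k)) (lam (S k)))).
    { intros z0 Hz0. destruct (Hs z0 (lam (S k)) Hz0 HlS) as [_ H2]. lra. }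
    destruct (Hd (lam (S k)) HlS (ex_intro _ _ Hlb)) as [Hlb2 Hmx].
    split; [|exact Hlb2]. apply Rle_antisym; [apply Hlb2, HxX| apply Hmx, Hlb]. }
  pose (ell := fun j l => d (lam (S j)) + / eta j * dot m (vsub (gh (lam (S j))) (gh (y j))) (vsub l (lam (S j)))).
  pose (phi := fun k l => - G * Breg m h gh l (lam 0%nat) + rsum (S k) (fun j => eta j / theta j * ell j l)).
  assert (F2 : forall k l, LamSet m ineq l -> Lag m n f A b (x (S k)) l <= ell k l).
  { intros k l0 Hl0. destruct (Hsaddle k) as [HxX [HlS Hs]].
    pose proof (Heta k) as He.
    assert (M := maxlemma m ineq h gh HhC1 (/ eta k)
      (fun l => Lag m n f A b (x (S k)) l - / eta k * Breg m h gh l (y k)) (lam (S k))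
      ltac:(apply Rinv_0_lt_compat; lra) HlS
      ltac:(intros l1 Hl1; exact (proj1 (Hs (x (S k)) l1 HxX Hl1)))).
    assert (M2 := M ltac:(intros l1 t Hl1 Ht; cbv beta; rewrite Lag_aff_lam by ring; unfold Breg;
        rewrite (dot_sub_lin _ _ t l1 (1-t)) by ring; ring) l0 Hl0).
    cbv beta in M2. unfold ell. rewrite (three_point m h gh). destruct (F1 k) as [E _]. rewrite E.
    assert (E2 : / eta k * (Breg m h gh l0 (y k) - Breg m h gh l0 (lam (S k)) - Breg m h gh (lam (S k)) (y k))
      = / eta k * Breg m h gh l0 (y k) - / eta k * Breg m h gh l0 (lam (S k)) - / eta k * Breg m h gh (lam (S k)) (y k)) by ring.
    rewrite E2. lra. }
  assert (F3 : forall k l, LamSet m ineq l -> phi k l <= phi k (v (S k)) - G * Breg m h gh l (v (S k))).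
  { intros k. apply (maxlemma m ineq h gh HhC1 G (phi k) (v (S k))); [lra| apply HvL| exact (proj2 (Hv k))|].
    intros l1 t Hl1 Ht. unfold phi. unfold Breg.
    rewrite (dot_sub_lin _ _ t l1 (1-t)) by ring.
    assert (R : rsum (S k) (fun j => eta j / theta j * ell j (vlin t l1 (1 - t) (v (S k))))
      = t * rsum (S k) (fun j => eta j / theta j * ell j l1) + (1-t) * rsum (S k) (fun j => eta j / theta j * ell j (v (S k)))).
    { rewrite <- rsum_lin2. apply rsum_ext. intros j. unfold ell.
      rewrite (dot_sub_lin _ _ t l1 (1-t)) by ring. ring. }
    rewrite R. ring. }
  assert (Hdl : forall k, d (lam (S k)) <= ell (S k) (lam (S k))).
  { intros k. destruct (F1 k) as [_ Hlb]. destruct (Hsaddle (S k)) as [HxX _].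
    apply Rle_trans with (Lag m n f A b (x (S (S k))) (lam (S k))); [apply Hlb, HxX| apply F2, HlamL]. }
  assert (Hkey : forall k, phi k (v (S k)) <= eta k / theta k ^ 2 * d (lam (S k))).
  { induction k.
    - assert (Hy0 : y 0%nat = lam 0%nat).
      { rewrite Hy, Hv0, Htheta0. extensionality i. unfold vlin. ring. }
      unfold phi, ell. simpl rsum. rewrite (three_point m h gh), Hy0, Htheta0.
      pose proof (Heta 0%nat) as He.
      pose proof (HD0 (v 1%nat) (lam 1%nat) (HvL _) (HlamL _)).
      pose proof (HD0 (lam 1%nat) (lam 0%nat) (HlamL _) (HlamL _)).
      pose proof (HD0 (v 1%nat) (lam 0%nat) (HvL _) (HlamL _)).
      set (X1 := Breg m h gh (v 1%nat) (lam 0%nat) - Breg m h gh (v 1%nat) (lam 1%nat) - Breg m h gh (lam 1%nat) (lam 0%nat)).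
      assert (E : eta 0%nat / 1 * (d (lam 1%nat) + / eta 0%nat * X1) = eta 0%nat * d (lam 1%nat) + X1) by (field; lra).
      rewrite E. replace (eta 0%nat / 1 ^ 2) with (eta 0%nat) by field. unfold X1. nra.
    - set (th := theta (S k)) in *. set (et := eta (S k)) in *.
      set (Ak := eta k / theta k ^ 2) in *. set (A1 := et / th ^ 2).
      destruct (Hth (S k)) as [Ht0 Ht1]. fold th in Ht0, Ht1.
      pose proof (Heta (S k)) as He. fold et in He.
      assert (HAk : Ak = A1 * (1 - th)).
      { unfold Ak. destruct (Htheta k) as [_ E]. fold th et in E. rewrite E. unfold A1. field. lra. }
      assert (Hw : et / th = A1 * th) by (unfold A1; field; lra).
      assert (HA1 : A1 * / et * th ^ 2 = 1) by (unfold A1; field; lra).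
      assert (HA1p : 0 <= A1 * / et).
      { unfold A1. apply Rmult_le_pos; [apply Rlt_le, Rdiv_lt_0_compat; [lra| apply pow_lt; lra]| apply Rlt_le, Rinv_0_lt_compat; lra]. }
      assert (HAkp : 0 <= Ak) by (rewrite HAk; unfold A1; apply Rmult_le_pos; [apply Rlt_le, Rdiv_lt_0_compat; [lra| apply pow_lt; lra]| lra]).
      set (v' := v (S (S k))). set (vv := v (S k)). set (l1 := lam (S k)). set (lp := lam (S (S k))).
      set (u := vlin (1 - th) l1 th v').
      assert (Hsplit : phi (S k) v' = phi k v' + et / th * ell (S k) v') by (unfold phi; rewrite (rsum_S (S k)); cbv beta; fold et th; ring).
      assert (F3' := F3 k v' (HvL _)). fold vv in F3'.
      assert (Hd1 := Hdl k). fold l1 in Hd1.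
      assert (Haff : ell (S k) u = (1 - th) * ell (S k) l1 + th * ell (S k) v').
      { unfold ell, u. rewrite (dot_sub_lin _ _ (1 - th) l1 th) by ring. ring. }
      assert (HuL : LamSet m ineq u) by (apply LamSet_lin; [lra|lra|apply HlamL|apply HvL]).
      assert (Hyy : y (S k) = vlin (1 - th) l1 th vv).
      { rewrite Hy. extensionality i. unfold vlin. fold th vv l1. ring. }
      assert (HTs := HTSP l1 v' vv th (HlamL _) (HvL _) (HvL _) ltac:(lra)).
      fold u in HTs. rewrite <- Hyy in HTs.
      assert (Hell : ell (S k) u = d lp + / et * (Breg m h gh u (y (S k)) - Breg m h gh u lp - Breg m h gh lp (y (S k)))).
      { unfold ell. fold lp et. rewrite (three_point m h gh). reflexivity. }
      pose proof (HD0 u lp HuL (HlamL _)). pose proof (HD0 lp (y (S k)) (HlamL _) (HyL _)).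
      assert (HQ : A1 * / et * (Breg m h gh u (y (S k)) - Breg m h gh u lp - Breg m h gh lp (y (S k)))
                   <= A1 * / et * (G * th ^ 2 * Breg m h gh v' vv)).
      { apply Rmult_le_compat_l; [exact HA1p| lra]. }
      assert (Hm1 : Ak * d l1 <= Ak * ell (S k) l1) by (apply Rmult_le_compat_l; lra).
      rewrite Hsplit. fold A1.
      assert (HQ2 : A1 * ell (S k) u = A1 * d lp + A1 * / et * (Breg m h gh u (y (S k)) - Breg m h gh u lp - Breg m h gh lp (y (S k)))) by (rewrite Hell; ring).
      assert (HQ3 : A1 * / et * (G * th ^ 2 * Breg m h gh v' vv) = G * Breg m h gh v' vv)
        by (replace (A1 * / et * (G * th ^ 2 * Breg m h gh v' vv)) with ((A1 * / et * th ^ 2) * (G * Breg m h gh v' vv)) by ring; rewrite HA1; ring).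
      rewrite Hw. rewrite HAk in Hm1.
      assert (HQ4 : A1 * ell (S k) u = A1 * (1 - th) * ell (S k) l1 + A1 * th * ell (S k) v') by (rewrite Haff; ring).
      change (v (S k)) with vv in IHk. change (lam (S k)) with l1 in IHk. rewrite HAk in IHk. lra. }
  destruct Hstar as [HsL [dstar [[Hlb _] Hdmax]]].
  assert (Hdd : forall k, d (lam (S k)) <= dstar).
  { intros k. apply (Hdmax (lam (S k)) (d (lam (S k))) (HlamL _)). apply (proj2 (F1 k)). }
  assert (Hbound : forall j, eta j / theta j * dstar <= eta j / theta j * d (lam (S j))
                     + G * Breg m h gh lamstar (lam 0%nat) * theta j).
  { intros j.
    assert (P1 : phi j lamstar <= eta j / theta j ^ 2 * d (lam (S j)))
      by (apply Rle_trans with (phi j (v (S j))); [exact (proj2 (Hv j) lamstar HsL)| apply Hkey]).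
    assert (P2 : rsum (S j) (fun i => eta i / theta i * dstar) <= rsum (S j) (fun i => eta i / theta i * ell i lamstar)).
    { apply rsum_le. intros i _. apply Rmult_le_compat_l.
      - apply Rlt_le, Rdiv_lt_0_compat; [apply Heta| apply Hth].
      - destruct (Hsaddle i) as [HxX _].
        apply Rle_trans with (Lag m n f A b (x (S i)) lamstar); [apply Hlb, HxX| apply F2, HsL]. }
    rewrite (rsum_ext _ _ (fun i => dstar * (eta i / theta i))) in P2 by (intros; cbv beta; ring).
    rewrite rsum_scal, HA in P2.
    unfold phi in P1.
    destruct (Hth j) as [Ht0 Ht1]. pose proof (Heta j) as He.
    set (Aj := eta j / theta j ^ 2) in *.
    assert (Hw : eta j / theta j = Aj * theta j) by (unfold Aj; field; lra).
    rewrite Hw. nra. }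
  destruct T as [|K]; [lia|].
  pose (w := fun k => eta k / theta k).
  assert (Hwp : forall k, 0 < w k) by (intros k; apply Rdiv_lt_0_compat; [apply Heta| apply Hth]).
  assert (J1 := jensen w x (supp n) (fun p => Lag m n f A b p l) Hwp
    ltac:(intros p q t Hp Hq Ht; split; [intros i Hi; unfold vlin; rewrite Hp, Hq by exact Hi; ring
          | apply Lag_conv_x; assumption])
    (fun k => HXsupp _ (proj1 (Hsaddle k))) K).
  assert (J2 := jensen w lam (fun _ => True) (fun p => - Lag m n f A b z p) Hwp
    ltac:(intros p q t Hp Hq Ht; split; [exact I| rewrite Lag_aff_lam by ring; lra])
    (fun k => I) K).
  destruct J1 as [_ J1]. destruct J2 as [_ J2]. cbv beta in J1, J2.
  change (ergavg eta theta x (S K)) with (avg w x (S K)).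
  change (ergavg eta theta lam (S K)) with (avg w lam (S K)).
  change (rsum (S K) (fun k => eta k / theta k)) with (rsum (S K) w).
  assert (J3 : rsum (S K) (fun k => w k * - Lag m n f A b z (lam (S k)))
     = (-1) * rsum (S K) (fun k => w k * Lag m n f A b z (lam (S k)))).
  { rewrite <- rsum_scal. apply rsum_ext. intros; ring. }
  rewrite J3 in J2.
  assert (E2 : rsum (S K) (fun k => w k * Lag m n f A b (x (S k)) l)
              - rsum (S K) (fun k => w k * Lag m n f A b z (lam (S k)))
              <= G * Breg m h gh l (lam 0%nat) + G * Breg m h gh lamstar (lam 0%nat) * rsum (S K) theta).
  { assert (S1 : rsum (S K) (fun k => w k * Lag m n f A b (x (S k)) l) <= rsum (S K) (fun k => w k * ell k l)).
    { apply rsum_le. intros i _. apply Rmult_le_compat_l; [apply Rlt_le, Hwp| apply F2, Hl]. }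
    assert (S2 : rsum (S K) (fun k => w k * d (lam (S k))) <= rsum (S K) (fun k => w k * Lag m n f A b z (lam (S k)))).
    { apply rsum_le. intros i _. apply Rmult_le_compat_l; [apply Rlt_le, Hwp| apply (proj2 (F1 i)), Hz]. }
    assert (S3 : phi K l <= phi K (v (S K))) by exact (proj2 (Hv K) l Hl).
    assert (S4 := Hkey K).
    assert (S5 : eta K / theta K ^ 2 * d (lam (S K)) <= eta K / theta K ^ 2 * dstar).
    { apply Rmult_le_compat_l; [|apply Hdd]. destruct (Hth K).
      apply Rlt_le, Rdiv_lt_0_compat; [apply Heta| apply pow_lt; lra]. }
    assert (S6 : rsum (S K) (fun k => w k * dstar) <= rsum (S K) (fun k => 1 * (w k * d (lam (S k))) + (G * Breg m h gh lamstar (lam 0%nat)) * theta k)).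
    { apply rsum_le. intros i _. pose proof (Hbound i). unfold w. lra. }
    rewrite rsum_lin2 in S6.
    rewrite (rsum_ext _ _ (fun k => dstar * w k)) in S6 by (intros; cbv beta; ring).
    rewrite rsum_scal in S6. unfold w in S6. rewrite HA in S6. fold w in S6.
    change (rsum (S K) (fun i => eta i / theta i * d (lam (S i)))) with (rsum (S K) (fun k => w k * d (lam (S k)))) in S6.
    assert (Ephi : phi K l = - G * Breg m h gh l (lam 0%nat) + rsum (S K) (fun k => w k * ell k l)) by reflexivity.
    lra. }
  pose proof (rsum_pos K w Hwp) as HSp.
  apply Rmult_le_reg_l with (rsum (S K) w); [exact HSp|].
  replace (rsum (S K) w * ((G * Breg m h gh l (lam 0%nat) + G * Breg m h gh lamstar (lam 0%nat) * rsum (S K) theta) / rsum (S K) w))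
    with (G * Breg m h gh l (lam 0%nat) + G * Breg m h gh lamstar (lam 0%nat) * rsum (S K) theta) by (field; lra).
  lra.
Qed.
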